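(* Let $\mathcal{M}_H$ be a tetrahedral mesh of a polyhedral domain $\Omega\subset\mathbb{R}^3$ and $\mathcal{M}_h$ its uniform refinement (each tetrahedron split into eight by the edge midpoints, as in the standard regular refinement). For a mesh $\mathcal{M}$ let $$W(\mathcal{M})=\{v\in C^0(\overline\Omega): v|_K\in \mathbb{P}_2(K)\oplus\operatorname{span}\{b_{F}: F \text{ a face of } K\}\ \forall K\in\mathcal{M}\},$$ where for a face $F$ of $K$ with barycentric coordinates $\lambda_i,\lambda_j,\lambda_k$ of $K$ nonzero on $F$, $b_F=\lambda_i\lambda_j\lambda_k$ is the cubic face bubble. Let $E_H:W(\mathcal{M}_H)\to W(\mathcal{M}_h)$ be nodal interpolation at the degrees of freedom of $W(\mathcal{M}_h)$ (point values at the vertices, the edge midpoints, and the face barycenters of $\mathcal{M}_h$). Then for every $u_H\in W(\mathcal{M}_H)$ and every face $F$ of $\mathcal{M}_H$, $$(E_H u_H)|_F=u_H|_F,$$ in particular $\int_F E_Hu_H\,\mathrm{d}s=\int_F u_H\,\mathrm{d}s$ for every coarse face $F$ (and the same holds componentwise for vector fields in $[W(\mathcal{M}_H)]^3$, so normal fluxes across coarse faces are preserved).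
   Context: The space $W(\mathcal{M})$ is the continuous piecewise quadratic space enriched with cubic face bubbles (denoted $\mathbb{P}_2\oplus B^F_3$). Note that $W(\mathcal{M}_H)\not\subset W(\mathcal{M}_h)$ in general. *)

(* Defs.v *)
From Stdlib Require Import Reals List.
Import ListNotations.
Open Scope R_scope.

Record pt := Pt { px : R; py : R; pz : R }.

Definition padd (a b : pt) : pt := Pt (px a + px b) (py a + py b) (pz a + pz b).
Definition pscale (s : R) (a : pt) : pt := Pt (s * px a) (s * py a) (s * pz a).
Definition psub (a b : pt) : pt := padd a (pscale (-1) b).
Definition dist (a b : pt) : R :=
  sqrt ((px a - px b)^2 + (py a - py b)^2 + (pz a - pz b)^2).
Definition midpoint (a b : pt) : pt := pscale (1/2) (padd a b).
Definition barycenter3 (a b c : pt) : pt := pscale (1/3) (padd a (padd b c)).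

Record tet := Tet { v0 : pt; v1 : pt; v2 : pt; v3 : pt }.

Definition verts (K : tet) : list pt := [v0 K; v1 K; v2 K; v3 K].

Definition is_bary4 (l0 l1 l2 l3 : R) : Prop :=
  0 <= l0 /\ 0 <= l1 /\ 0 <= l2 /\ 0 <= l3 /\ l0 + l1 + l2 + l3 = 1.

Definition bary (K : tet) (l0 l1 l2 l3 : R) : pt :=
  padd (pscale l0 (v0 K)) (padd (pscale l1 (v1 K))
    (padd (pscale l2 (v2 K)) (pscale l3 (v3 K)))).

Definition in_tet (K : tet) (x : pt) : Prop :=
  exists l0 l1 l2 l3, is_bary4 l0 l1 l2 l3 /\ x = bary K l0 l1 l2 l3.

Definition in_tri (a b c : pt) (x : pt) : Prop :=
  exists l0 l1 l2, 0 <= l0 /\ 0 <= l1 /\ 0 <= l2 /\ l0 + l1 + l2 = 1 /\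
    x = padd (pscale l0 a) (padd (pscale l1 b) (pscale l2 c)).

Definition faces (K : tet) : list (pt * pt * pt) :=
  [(v1 K, v2 K, v3 K); (v0 K, v2 K, v3 K); (v0 K, v1 K, v3 K); (v0 K, v1 K, v2 K)].

Definition edges (K : tet) : list (pt * pt) :=
  [(v0 K, v1 K); (v0 K, v2 K); (v0 K, v3 K); (v1 K, v2 K); (v1 K, v3 K); (v2 K, v3 K)].

Definition det3 (a b c : pt) : R :=
  px a * (py b * pz c - pz b * py c)
  - py a * (px b * pz c - pz b * px c)
  + pz a * (px b * py c - py b * px c).

Definition nondegenerate (K : tet) : Prop :=
  det3 (psub (v1 K) (v0 K)) (psub (v2 K) (v0 K)) (psub (v3 K) (v0 K)) <> 0.

Fixpoint lincomb (w : list R) (l : list pt) : pt :=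
  match w, l with
  | a :: w', p :: l' => padd (pscale a p) (lincomb w' l')
  | _, _ => Pt 0 0 0
  end.

Definition in_hull (l : list pt) (x : pt) : Prop :=
  exists w : list R, length w = length l /\ Forall (fun a => 0 <= a) w /\
    fold_right Rplus 0 w = 1 /\ x = lincomb w l.

Definition in_hull_pred (P : pt -> Prop) (x : pt) : Prop :=
  exists l, Forall P l /\ in_hull l x.

(** A (conforming) tetrahedral mesh: nondegenerate tetrahedra such that two
    distinct elements intersect exactly in the convex hull of their common
    vertices (i.e. in the empty set, a common vertex, edge or face). *)
Definition is_mesh (M : list tet) : Prop :=
  (forall K, In K M -> nondegenerate K) /\
  (forall K1 K2, In K1 M -> In K2 M -> K1 <> K2 ->
     forall x, (in_tet K1 x /\ in_tet K2 x) <->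
               in_hull_pred (fun p => In p (verts K1) /\ In p (verts K2)) x).

Definition domain (M : list tet) (x : pt) : Prop := exists K, In K M /\ in_tet K x.

(** Regular (red) refinement of one tetrahedron into eight children:
    4 corner tetrahedra and the inner octahedron cut into 4 tetrahedra along
    one of its three diagonals (choice [diag]). *)
Inductive diag := D0 | D1 | D2.

Definition children (K : tet) (d : diag) : list tet :=
  let p0 := v0 K in let p1 := v1 K in let p2 := v2 K in let p3 := v3 K in
  let m01 := midpoint p0 p1 in let m02 := midpoint p0 p2 in
  let m03 := midpoint p0 p3 in let m12 := midpoint p1 p2 in
  let m13 := midpoint p1 p3 in let m23 := midpoint p2 p3 in
  let octa (a a' b c b' c' : pt) :=
      [Tet a a' b c; Tet a a' c b'; Tet a a' b' c'; Tet a a' c' b] in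
  [Tet p0 m01 m02 m03; Tet m01 p1 m12 m13; Tet m02 m12 p2 m23; Tet m03 m13 m23 p3]
  ++ match d with
     | D0 => octa m02 m13 m01 m03 m23 m12   (* Bey's standard diagonal *)
     | D1 => octa m01 m23 m02 m03 m13 m12
     | D2 => octa m03 m12 m01 m02 m23 m13
     end.

Definition is_uniform_refinement (MH Mh : list tet) : Prop :=
  exists d : tet -> diag,
    forall K', In K' Mh <-> exists K, In K MH /\ In K' (children K (d K)).

Definition P2eval (c : nat -> R) (x : pt) : R :=
  c 0%nat + c 1%nat * px x + c 2%nat * py x + c 3%nat * pz x
  + c 4%nat * px x ^ 2 + c 5%nat * py x ^ 2 + c 6%nat * pz x ^ 2
  + c 7%nat * (px x * py x) + c 8%nat * (px x * pz x) + c 9%nat * (py x * pz x).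

(** v|_K \in P_2(K) (+) span{b_F : F face of K}, where the face bubble of the
    face opposite vertex i is the product of the other three barycentric
    coordinates. *)
Definition local_space (K : tet) (v : pt -> R) : Prop :=
  exists (c : nat -> R) (d0 d1 d2 d3 : R),
    forall l0 l1 l2 l3, is_bary4 l0 l1 l2 l3 ->
      v (bary K l0 l1 l2 l3) =
        P2eval c (bary K l0 l1 l2 l3)
        + d0 * (l1 * l2 * l3) + d1 * (l0 * l2 * l3)
        + d2 * (l0 * l1 * l3) + d3 * (l0 * l1 * l2).

Definition cont_on (S : pt -> Prop) (v : pt -> R) : Prop :=
  forall x, S x -> forall eps, 0 < eps -> exists delta, 0 < delta /\
    forall y, S y -> dist x y < delta -> Rabs (v y - v x) < eps.

Definition W (M : list tet) (v : pt -> R) : Prop :=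
  cont_on (domain M) v /\ forall K, In K M -> local_space K v.

Definition is_node (M : list tet) (p : pt) : Prop :=
  exists K, In K M /\
    (In p (verts K)
     \/ (exists a b, In (a, b) (edges K) /\ p = midpoint a b)
     \/ (exists a b c, In (a, b, c) (faces K) /\ p = barycenter3 a b c)).

(* Main.v *)
Require Import Defs.
From Stdlib Require Import Reals List Lra.
Import ListNotations.
Open Scope R_scope.

Lemma pt_eq p q : px p = px q -> py p = py q -> pz p = pz q -> p = q.
Proof. destruct p, q; simpl; intros; subst; reflexivity. Qed.

Definition L (x y z s t : R) := x*(1-s-t) + y*s + z*t.

Definition Vf (f : R -> R -> R) : Prop := exists A B C D E F G : R, forall s t,
  f s t = A + B*s + C*t + D*(s*s) + E*(t*t) + F*(s*t) + G*(s*t*(1-s-t)).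
Definition Aff (f : R -> R -> R) : Prop := exists a b c : R, forall s t, f s t = a + b*s + c*t.

Lemma Vf_add f g : Vf f -> Vf g -> Vf (fun s t => f s t + g s t).
Proof.
  intros (A&B&C&D&E&F&G&H) (A'&B'&C'&D'&E'&F'&G'&H').
  exists (A+A'), (B+B'), (C+C'), (D+D'), (E+E'), (F+F'), (G+G').
  intros s t; rewrite H, H'; ring.
Qed.

Lemma Vf_scal k f : Vf f -> Vf (fun s t => k * f s t).
Proof.
  intros (A&B&C&D&E&F&G&H).
  exists (k*A), (k*B), (k*C), (k*D), (k*E), (k*F), (k*G).
  intros s t; rewrite H; ring.
Qed.

Lemma Vf_const k : Vf (fun s t => k).
Proof. exists k, 0, 0, 0, 0, 0, 0. intros; ring. Qed.

Lemma Aff_Vf f : Aff f -> Vf f.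
Proof. intros (a&b&c&H). exists a, b, c, 0, 0, 0, 0. intros; rewrite H; ring. Qed.

Lemma Aff_mul f g : Aff f -> Aff g -> Vf (fun s t => f s t * g s t).
Proof.
  intros (a&b&c&H) (a'&b'&c'&H').
  exists (a*a'), (a*b'+b*a'), (a*c'+c*a'), (b*b'), (c*c'), (b*c'+c*b'), 0.
  intros s t; rewrite H, H'; ring.
Qed.

Lemma Aff_sq f : Aff f -> Vf (fun s t => f s t ^ 2).
Proof.
  intros Hf. destruct (Aff_mul f f Hf Hf) as (A&B&C&D&E&F&G&H).
  exists A, B, C, D, E, F, G. intros s t; rewrite <- H; ring.
Qed.

Definition bub_ok (x1 y1 z1 x2 y2 z2 x3 y3 z3 : R) : Prop :=
  (y1-x1)*(y2-x2)*(y3-x3) = 0 /\ (z1-x1)*(z2-x2)*(z3-x3) = 0 /\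
  (y1-x1)*(y2-x2)*(z3-x3) + (y1-x1)*(z2-x2)*(y3-x3) + (z1-x1)*(y2-x2)*(y3-x3)
  = (y1-x1)*(z2-x2)*(z3-x3) + (z1-x1)*(y2-x2)*(z3-x3) + (z1-x1)*(z2-x2)*(y3-x3).

Lemma Vf_cubic0 a1 b1 c1 a2 b2 c2 a3 b3 c3 :
  b1*b2*b3 = 0 -> c1*c2*c3 = 0 ->
  b1*b2*c3+b1*c2*b3+c1*b2*b3 = b1*c2*c3+c1*b2*c3+c1*c2*b3 ->
  Vf (fun s t => (a1 + b1*s + c1*t) * (a2 + b2*s + c2*t) * (a3 + b3*s + c3*t)).
Proof.
  intros Hb Hc HK.
  exists (a1*a2*a3), (b1*a2*a3 + a1*b2*a3 + a1*a2*b3), (c1*a2*a3 + a1*c2*a3 + a1*a2*c3),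
    (b1*b2*a3 + b1*a2*b3 + a1*b2*b3), (c1*c2*a3 + c1*a2*c3 + a1*c2*c3),
    (b1*c2*a3 + c1*b2*a3 + b1*a2*c3 + c1*a2*b3 + a1*b2*c3 + a1*c2*b3
      + (b1*b2*c3+b1*c2*b3+c1*b2*b3)), (- (b1*b2*c3+b1*c2*b3+c1*b2*b3)).
  intros s t.
  assert (E : (a1 + b1*s + c1*t) * (a2 + b2*s + c2*t) * (a3 + b3*s + c3*t) -
    (a1*a2*a3 + (b1*a2*a3 + a1*b2*a3 + a1*a2*b3)*s + (c1*a2*a3 + a1*c2*a3 + a1*a2*c3)*t
     + (b1*b2*a3 + b1*a2*b3 + a1*b2*b3)*(s*s) + (c1*c2*a3 + c1*a2*c3 + a1*c2*c3)*(t*t)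
     + (b1*c2*a3 + c1*b2*a3 + b1*a2*c3 + c1*a2*b3 + a1*b2*c3 + a1*c2*b3
      + (b1*b2*c3+b1*c2*b3+c1*b2*b3))*(s*t)
     + (- (b1*b2*c3+b1*c2*b3+c1*b2*b3))*(s*t*(1-s-t)))
    = (b1*b2*b3)*(s*s*s) + (c1*c2*c3)*(t*t*t)
      + ((b1*c2*c3+c1*b2*c3+c1*c2*b3) - (b1*b2*c3+b1*c2*b3+c1*b2*b3))*(s*t*t)).
  { ring. }
  rewrite Hb, Hc, <- HK in E. apply Rminus_diag_uniq. rewrite E. ring.
Qed.

Lemma Vf_cubic x1 y1 z1 x2 y2 z2 x3 y3 z3 :
  bub_ok x1 y1 z1 x2 y2 z2 x3 y3 z3 ->
  Vf (fun s t => L x1 y1 z1 s t * L x2 y2 z2 s t * L x3 y3 z3 s t).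
Proof.
  intros (Hb & Hc & HK).
  destruct (Vf_cubic0 x1 (y1-x1) (z1-x1) x2 (y2-x2) (z2-x2) x3 (y3-x3) (z3-x3) Hb Hc HK)
    as (A&B&C&D&E&F&G&H).
  exists A, B, C, D, E, F, G. intros s t. rewrite <- H. unfold L. ring.
Qed.

Lemma Aff_comb x0 y0 z0 x1 y1 z1 x2 y2 z2 x3 y3 z3 w0 w1 w2 w3 :
  Aff (fun s t => L x0 y0 z0 s t * w0 + (L x1 y1 z1 s t * w1 + (L x2 y2 z2 s t * w2 + L x3 y3 z3 s t * w3))).
Proof.
  exists (x0*w0+x1*w1+x2*w2+x3*w3), ((y0-x0)*w0+(y1-x1)*w1+(y2-x2)*w2+(y3-x3)*w3),
    ((z0-x0)*w0+(z1-x1)*w1+(z2-x2)*w2+(z3-x3)*w3).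
  intros; unfold L; ring.
Qed.

Lemma Vf_P2 c (P : R -> R -> pt) :
  Aff (fun s t => px (P s t)) -> Aff (fun s t => py (P s t)) -> Aff (fun s t => pz (P s t)) ->
  Vf (fun s t => P2eval c (P s t)).
Proof.
  intros HX HY HZ. unfold P2eval.
  repeat apply Vf_add.
  - apply Vf_const.
  - apply Vf_scal, Aff_Vf, HX.
  - apply Vf_scal, Aff_Vf, HY.
  - apply Vf_scal, Aff_Vf, HZ.
  - apply Vf_scal, Aff_sq, HX.
  - apply Vf_scal, Aff_sq, HY.
  - apply Vf_scal, Aff_sq, HZ.
  - apply Vf_scal, Aff_mul; assumption.
  - apply Vf_scal, Aff_mul; assumption.
  - apply Vf_scal, Aff_mul; assumption.
Qed.

Lemma L_nonneg x y z s t : 0 <= x -> 0 <= y -> 0 <= z -> 0 <= s -> 0 <= t -> s + t <= 1 ->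
  0 <= L x y z s t.
Proof.
  intros. unfold L. repeat apply Rplus_le_le_0_compat; apply Rmult_le_pos; lra.
Qed.

Lemma L_bary x0 y0 z0 x1 y1 z1 x2 y2 z2 x3 y3 z3 s t :
  is_bary4 x0 x1 x2 x3 -> is_bary4 y0 y1 y2 y3 -> is_bary4 z0 z1 z2 z3 ->
  0 <= s -> 0 <= t -> s + t <= 1 ->
  is_bary4 (L x0 y0 z0 s t) (L x1 y1 z1 s t) (L x2 y2 z2 s t) (L x3 y3 z3 s t).
Proof.
  intros (?&?&?&?&Hx) (?&?&?&?&Hy) (?&?&?&?&Hz) Hs Ht Hst.
  repeat split; try (apply L_nonneg; assumption).
  transitivity ((1-s-t)*(x0+x1+x2+x3) + s*(y0+y1+y2+y3) + t*(z0+z1+z2+z3)).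
  - unfold L; ring.
  - rewrite Hx, Hy, Hz; ring.
Qed.

Definition Vtri (g : R -> R -> R) : Prop := exists A B C D E F G : R, forall s t,
  0 <= s -> 0 <= t -> s + t <= 1 ->
  g s t = A + B*s + C*t + D*(s*s) + E*(t*t) + F*(s*t) + G*(s*t*(1-s-t)).

Lemma Vtri_local K v x0 x1 x2 x3 y0 y1 y2 y3 z0 z1 z2 z3 :
  local_space K v ->
  is_bary4 x0 x1 x2 x3 -> is_bary4 y0 y1 y2 y3 -> is_bary4 z0 z1 z2 z3 ->
  bub_ok x1 y1 z1 x2 y2 z2 x3 y3 z3 ->
  bub_ok x0 y0 z0 x2 y2 z2 x3 y3 z3 ->
  bub_ok x0 y0 z0 x1 y1 z1 x3 y3 z3 ->
  bub_ok x0 y0 z0 x1 y1 z1 x2 y2 z2 ->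
  Vtri (fun s t => v (bary K (L x0 y0 z0 s t) (L x1 y1 z1 s t) (L x2 y2 z2 s t) (L x3 y3 z3 s t))).
Proof.
  intros (c & d0 & d1 & d2 & d3 & Hv) Hx Hy Hz B0 B1 B2 B3.
  assert (HV : Vf (fun s t =>
    P2eval c (bary K (L x0 y0 z0 s t) (L x1 y1 z1 s t) (L x2 y2 z2 s t) (L x3 y3 z3 s t))
    + d0 * (L x1 y1 z1 s t * L x2 y2 z2 s t * L x3 y3 z3 s t)
    + d1 * (L x0 y0 z0 s t * L x2 y2 z2 s t * L x3 y3 z3 s t)
    + d2 * (L x0 y0 z0 s t * L x1 y1 z1 s t * L x3 y3 z3 s t)
    + d3 * (L x0 y0 z0 s t * L x1 y1 z1 s t * L x2 y2 z2 s t))).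
  { do 4 (apply Vf_add; [| apply Vf_scal, Vf_cubic; assumption]).
    apply Vf_P2; simpl; apply Aff_comb. }
  destruct HV as (A&B&C&D&E&F&G&H).
  exists A, B, C, D, E, F, G. intros s t Hs Ht Hst.
  rewrite Hv by (apply L_bary; assumption). apply H.
Qed.

Definition T3 (a b c : pt) (l0 l1 l2 : R) : pt :=
  padd (pscale l0 a) (padd (pscale l1 b) (pscale l2 c)).

Lemma T3L K x0 x1 x2 x3 y0 y1 y2 y3 z0 z1 z2 z3 s t :
  T3 (bary K x0 x1 x2 x3) (bary K y0 y1 y2 y3) (bary K z0 z1 z2 z3) (1-s-t) s t =
  bary K (L x0 y0 z0 s t) (L x1 y1 z1 s t) (L x2 y2 z2 s t) (L x3 y3 z3 s t).
Proof. apply pt_eq; simpl; unfold L; ring. Qed.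

Lemma bv0 K : v0 K = bary K 1 0 0 0. Proof. apply pt_eq; simpl; ring. Qed.
Lemma bv1 K : v1 K = bary K 0 1 0 0. Proof. apply pt_eq; simpl; ring. Qed.
Lemma bv2 K : v2 K = bary K 0 0 1 0. Proof. apply pt_eq; simpl; ring. Qed.
Lemma bv3 K : v3 K = bary K 0 0 0 1. Proof. apply pt_eq; simpl; ring. Qed.
Lemma bm01 K : midpoint (v0 K) (v1 K) = bary K (1/2) (1/2) 0 0.
Proof. apply pt_eq; simpl; field. Qed.
Lemma bm02 K : midpoint (v0 K) (v2 K) = bary K (1/2) 0 (1/2) 0.
Proof. apply pt_eq; simpl; field. Qed.
Lemma bm03 K : midpoint (v0 K) (v3 K) = bary K (1/2) 0 0 (1/2).
Proof. apply pt_eq; simpl; field. Qed.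
Lemma bm12 K : midpoint (v1 K) (v2 K) = bary K 0 (1/2) (1/2) 0.
Proof. apply pt_eq; simpl; field. Qed.
Lemma bm13 K : midpoint (v1 K) (v3 K) = bary K 0 (1/2) 0 (1/2).
Proof. apply pt_eq; simpl; field. Qed.
Lemma bm23 K : midpoint (v2 K) (v3 K) = bary K 0 0 (1/2) (1/2).
Proof. apply pt_eq; simpl; field. Qed.

Ltac solve_in := repeat first [apply in_eq | apply in_cons | (left; reflexivity) | right].

Lemma face_info K a b c : In (a, b, c) (faces K) ->
  In a (verts K) /\ In b (verts K) /\ In c (verts K) /\
  In (a, b) (edges K) /\ In (a, c) (edges K) /\ In (b, c) (edges K).
Proof.
  simpl; intros [H|[H|[H|[H|[]]]]]; injection H; intros; subst;
  repeat split; unfold verts, edges; solve_in.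
Qed.

Ltac bnum := unfold is_bary4, bub_ok; repeat split; lra.

Lemma face_coeffs K a b c : In (a, b, c) (faces K) ->
  exists x0 x1 x2 x3 y0 y1 y2 y3 z0 z1 z2 z3,
  a = bary K x0 x1 x2 x3 /\ b = bary K y0 y1 y2 y3 /\ c = bary K z0 z1 z2 z3 /\
  is_bary4 x0 x1 x2 x3 /\ is_bary4 y0 y1 y2 y3 /\ is_bary4 z0 z1 z2 z3 /\
  bub_ok x1 y1 z1 x2 y2 z2 x3 y3 z3 /\
  bub_ok x0 y0 z0 x2 y2 z2 x3 y3 z3 /\
  bub_ok x0 y0 z0 x1 y1 z1 x3 y3 z3 /\
  bub_ok x0 y0 z0 x1 y1 z1 x2 y2 z2.
Proof.
  simpl; intros [H|[H|[H|[H|[]]]]]; injection H; intros; subst;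
  do 12 eexists; (split; [first [apply bv0|apply bv1|apply bv2|apply bv3]|]);
  (split; [first [apply bv0|apply bv1|apply bv2|apply bv3]|]);
  (split; [first [apply bv0|apply bv1|apply bv2|apply bv3]|]); bnum.
Qed.

Lemma unisolv (p : R -> R -> R) :
  Vtri p -> p 0 0 = 0 -> p 1 0 = 0 -> p 0 1 = 0 -> p (1/2) 0 = 0 -> p 0 (1/2) = 0 ->
  p (1/2) (1/2) = 0 -> p (1/3) (1/3) = 0 ->
  forall s t, 0 <= s -> 0 <= t -> s + t <= 1 -> p s t = 0.
Proof.
  intros (A&B&C&D&E&F&G&H) H1 H2 H3 H4 H5 H6 H7 s t Hs Ht Hst.
  rewrite H in H1, H2, H3, H4, H5, H6, H7 by lra.
  assert (A = 0) by lra.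
  assert (B = 0 /\ D = 0) as [? ?] by lra.
  assert (C = 0 /\ E = 0) as [? ?] by lra.
  assert (F = 0) by lra.
  assert (G = 0) by lra.
  rewrite H by lra. subst. ring.
Qed.

Lemma Vtri_sub f g : Vtri f -> Vtri g -> Vtri (fun s t => f s t - g s t).
Proof.
  intros (A&B&C&D&E&F&G&H) (A'&B'&C'&D'&E'&F'&G'&H').
  exists (A-A'), (B-B'), (C-C'), (D-D'), (E-E'), (F-F'), (G-G').
  intros s t Hs Ht Hst; rewrite H, H' by assumption; ring.
Qed.

Lemma Vtri_T3 K v a b c x0 x1 x2 x3 y0 y1 y2 y3 z0 z1 z2 z3 :
  local_space K v ->
  a = bary K x0 x1 x2 x3 -> b = bary K y0 y1 y2 y3 -> c = bary K z0 z1 z2 z3 ->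
  is_bary4 x0 x1 x2 x3 -> is_bary4 y0 y1 y2 y3 -> is_bary4 z0 z1 z2 z3 ->
  bub_ok x1 y1 z1 x2 y2 z2 x3 y3 z3 ->
  bub_ok x0 y0 z0 x2 y2 z2 x3 y3 z3 ->
  bub_ok x0 y0 z0 x1 y1 z1 x3 y3 z3 ->
  bub_ok x0 y0 z0 x1 y1 z1 x2 y2 z2 ->
  Vtri (fun s t => v (T3 a b c (1-s-t) s t)).
Proof.
  intros Hl -> -> -> ? ? ? ? ? ? ?.
  destruct (Vtri_local K v x0 x1 x2 x3 y0 y1 y2 y3 z0 z1 z2 z3) as (A&B&C&D&E&F&G&HH);
    try assumption.
  exists A, B, C, D, E, F, G. intros s t Hs Ht Hst. rewrite T3L. apply HH; assumption.
Qed.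

Lemma T3_a a b c : T3 a b c (1-0-0) 0 0 = a.
Proof. destruct a as [a1 a2 a3], b as [b1 b2 b3], c as [c1 c2 c3]; apply pt_eq; simpl; ring. Qed.
Lemma T3_b a b c : T3 a b c (1-1-0) 1 0 = b.
Proof. destruct a as [a1 a2 a3], b as [b1 b2 b3], c as [c1 c2 c3]; apply pt_eq; simpl; ring. Qed.
Lemma T3_c a b c : T3 a b c (1-0-1) 0 1 = c.
Proof. destruct a as [a1 a2 a3], b as [b1 b2 b3], c as [c1 c2 c3]; apply pt_eq; simpl; ring. Qed.
Lemma T3_ab a b c : T3 a b c (1-(1/2)-0) (1/2) 0 = midpoint a b.
Proof. destruct a as [a1 a2 a3], b as [b1 b2 b3], c as [c1 c2 c3]; apply pt_eq; simpl; field. Qed.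
Lemma T3_ac a b c : T3 a b c (1-0-(1/2)) 0 (1/2) = midpoint a c.
Proof. destruct a as [a1 a2 a3], b as [b1 b2 b3], c as [c1 c2 c3]; apply pt_eq; simpl; field. Qed.
Lemma T3_bc a b c : T3 a b c (1-(1/2)-(1/2)) (1/2) (1/2) = midpoint b c.
Proof. destruct a as [a1 a2 a3], b as [b1 b2 b3], c as [c1 c2 c3]; apply pt_eq; simpl; field. Qed.
Lemma T3_abc a b c : T3 a b c (1-(1/3)-(1/3)) (1/3) (1/3) = barycenter3 a b c.
Proof. destruct a as [a1 a2 a3], b as [b1 b2 b3], c as [c1 c2 c3]; apply pt_eq; simpl; field. Qed.

Lemma core (K K' : tet) (uH EuH : pt -> R) (a b c x : pt) :
  in_tri a b c x -> In (a, b, c) (faces K') ->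
  local_space K uH -> local_space K' EuH ->
  (forall p, (In p (verts K') \/ (exists a b, In (a, b) (edges K') /\ p = midpoint a b) \/
      (exists a b c, In (a, b, c) (faces K') /\ p = barycenter3 a b c)) -> EuH p = uH p) ->
  forall x0 x1 x2 x3 y0 y1 y2 y3 z0 z1 z2 z3,
  a = bary K x0 x1 x2 x3 -> b = bary K y0 y1 y2 y3 -> c = bary K z0 z1 z2 z3 ->
  is_bary4 x0 x1 x2 x3 -> is_bary4 y0 y1 y2 y3 -> is_bary4 z0 z1 z2 z3 ->
  bub_ok x1 y1 z1 x2 y2 z2 x3 y3 z3 ->
  bub_ok x0 y0 z0 x2 y2 z2 x3 y3 z3 ->
  bub_ok x0 y0 z0 x1 y1 z1 x3 y3 z3 ->
  bub_ok x0 y0 z0 x1 y1 z1 x2 y2 z2 ->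
  EuH x = uH x.
Proof.
  intros Hx Hf Hu HE Hn x0 x1 x2 x3 y0 y1 y2 y3 z0 z1 z2 z3 Ha Hb Hc Bx By Bz B0 B1 B2 B3.
  assert (Vu : Vtri (fun s t => uH (T3 a b c (1-s-t) s t))).
  { eapply Vtri_T3; eassumption. }
  destruct (face_coeffs K' a b c Hf) as
    (x0'&x1'&x2'&x3'&y0'&y1'&y2'&y3'&z0'&z1'&z2'&z3'&Ha'&Hb'&Hc'&Bx'&By'&Bz'&B0'&B1'&B2'&B3').
  assert (VE : Vtri (fun s t => EuH (T3 a b c (1-s-t) s t))).
  { eapply Vtri_T3; eassumption. }
  destruct (face_info K' a b c Hf) as (Iva & Ivb & Ivc & Eab & Eac & Ebc).
  pose proof (unisolv _ (Vtri_sub _ _ VE Vu)) as U. cbv beta in U.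
  rewrite T3_a, T3_b, T3_c, T3_ab, T3_ac, T3_bc, T3_abc in U.
  destruct Hx as (l0 & l1 & l2 & H0 & H1 & H2 & Hs & ->).
  replace l0 with (1 - l1 - l2) by lra.
  fold (T3 a b c (1-l1-l2) l1 l2).
  apply Rminus_diag_uniq.
  apply U; try lra.
  all: apply Rminus_diag_eq, Hn; auto.
  - right; left; exists a, b; auto.
  - right; left; exists a, c; auto.
  - right; left; exists b, c; auto.
  - right; right; exists a, b, c; auto.
Qed.

Lemma split_tri a b c x : in_tri a b c x ->
  in_tri a (midpoint a b) (midpoint a c) x \/ in_tri b (midpoint b a) (midpoint b c) x \/
  in_tri c (midpoint c a) (midpoint c b) x \/
  in_tri (midpoint a b) (midpoint a c) (midpoint b c) x.
Proof.
  intros (l0 & l1 & l2 & H0 & H1 & H2 & Hs & ->).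
  destruct a as [a1 a2 a3], b as [b1 b2 b3], c as [c1 c2 c3].
  destruct (Rle_lt_dec (1/2) l0).
  { left. exists (2*l0-1), (2*l1), (2*l2). repeat split; try lra.
    apply pt_eq; simpl; replace l0 with (1-l1-l2) by lra; field. }
  destruct (Rle_lt_dec (1/2) l1).
  { right; left. exists (2*l1-1), (2*l0), (2*l2). repeat split; try lra.
    apply pt_eq; simpl; replace l0 with (1-l1-l2) by lra; field. }
  destruct (Rle_lt_dec (1/2) l2).
  { right; right; left. exists (2*l2-1), (2*l0), (2*l1). repeat split; try lra.
    apply pt_eq; simpl; replace l0 with (1-l1-l2) by lra; field. }
  right; right; right. exists (1-2*l2), (1-2*l1), (1-2*l0). repeat split; try lra.
  apply pt_eq; simpl; replace l0 with (1-l1-l2) by lra; field.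
Qed.

Lemma midpoint_comm a b : midpoint a b = midpoint b a.
Proof. apply pt_eq; simpl; ring. Qed.

Lemma p132 a b c x : in_tri a b c x -> in_tri a c b x.
Proof. intros (l0&l1&l2&?&?&?&?&->). exists l0, l2, l1. repeat split; try lra.
  apply pt_eq; simpl; ring. Qed.
Lemma p213 a b c x : in_tri a b c x -> in_tri b a c x.
Proof. intros (l0&l1&l2&?&?&?&?&->). exists l1, l0, l2. repeat split; try lra.
  apply pt_eq; simpl; ring. Qed.
Lemma p231 a b c x : in_tri a b c x -> in_tri b c a x.
Proof. intros (l0&l1&l2&?&?&?&?&->). exists l1, l2, l0. repeat split; try lra.
  apply pt_eq; simpl; ring. Qed.
Lemma p312 a b c x : in_tri a b c x -> in_tri c a b x.
Proof. intros (l0&l1&l2&?&?&?&?&->). exists l2, l0, l1. repeat split; try lra.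
  apply pt_eq; simpl; ring. Qed.
Lemma p321 a b c x : in_tri a b c x -> in_tri c b a x.
Proof. intros (l0&l1&l2&?&?&?&?&->). exists l2, l1, l0. repeat split; try lra.
  apply pt_eq; simpl; ring. Qed.
Lemma p123 a b c x : in_tri a b c x -> in_tri a b c x.
Proof. auto. Qed.

Ltac solve_pt := first [apply bv0|apply bv1|apply bv2|apply bv3|apply bm01|apply bm02
  |apply bm03|apply bm12|apply bm13|apply bm23].

Theorem mainTheorem3 :
  forall (MH Mh : list tet),
    is_mesh MH ->
    is_uniform_refinement MH Mh ->
    forall (uH : pt -> R), W MH uH ->
    forall (EuH : pt -> R), W Mh EuH ->
      (forall p, is_node Mh p -> EuH p = uH p) ->
      forall K, In K MH ->
      forall a b c, In (a, b, c) (faces K) ->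
      forall x, in_tri a b c x -> EuH x = uH x.
Proof.
  intros MH Mh _ [d Href] uH [_ HuH] EuH [_ HE] Hnode K HK a b c Hf x Hx.
  assert (Hch : forall K', In K' (children K (d K)) -> In K' Mh).
  { intros K' HK'. apply Href. exists K. auto. }
  revert Hch. destruct (d K); intro Hch.
  all: simpl in Hf; destruct Hf as [Hf|[Hf|[Hf|[Hf|[]]]]]; injection Hf; intros; subst.
  all: destruct (split_tri _ _ _ _ Hx) as [H|[H|[H|H]]]; clear Hx.
  all: rewrite ?(midpoint_comm (v1 K) (v0 K)), ?(midpoint_comm (v2 K) (v0 K)),
     ?(midpoint_comm (v3 K) (v0 K)), ?(midpoint_comm (v2 K) (v1 K)),
     ?(midpoint_comm (v3 K) (v1 K)), ?(midpoint_comm (v3 K) (v2 K)) in H.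
  all: match type of Hch with forall _, In _ (children _ ?dd) -> _ =>
     let Lc := eval cbv beta iota zeta delta [children app] in (children K dd) in
     let rec try_children l :=
       match l with
       | ?K' :: ?rest =>
           first [
             let go pf :=
               eapply (core K K' uH EuH _ _ _ x (pf _ _ _ _ H));
               [ solve [cbv beta iota zeta delta [faces v0 v1 v2 v3]; solve_in]
               | solve [apply HuH; assumption]
               | solve [apply HE, Hch; cbv beta iota zeta delta [children app]; solve_in]
               | solve [intros p Hp; apply Hnode; exists K'; split;
                        [apply Hch; cbv beta iota zeta delta [children app]; solve_in | exact Hp]]
               | solve_pt | solve_pt | solve_pt | bnum .. ] in
             first [go p123 | go p132 | go p213 | go p231 | go p312 | go p321]
           | try_children rest ]
       end in
     try_children Lc
  end.
Qed.
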